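(* Let $(\Omega,T)$ be a minimal subshift over a finite alphabet $A$ such that no word in $L_5(\Omega)$ has repeated letters. Let $w=w_0\cdots w_{n-1}\in A^n$ with $n\geq4$. Then $w\in L(\Omega)$ if and only if $$\sigma_{[.w_0w_1]}\ast\Big(\sigma_{[.w_1w_2]}\ast\cdots\ast\big(\sigma_{[.w_{n-4}w_{n-3}]}\ast\sigma_{[w_{n-3}.w_{n-2}w_{n-1}]}\big)\cdots\Big)\neq 1\ \text{ in } G_T'.$$
   Context: $T$ is the left shift $(T\omega)_m=\omega_{m+1}$ on $A^{\mathbb Z}$; a minimal subshift is a closed shift-invariant $\Omega\subseteq A^{\mathbb Z}$ with every orbit dense. Words are indexed from $0$; $L_m(\Omega)$ is the set of words of length $m$ occurring in sequences of $\Omega$, $L(\Omega)=\bigcup_mL_m(\Omega)$. For words $u,v$ over $A$ (either may be empty), $[u.v]=\{\omega\in\Omega:\omega_{-i}=u_{|u|-i}\ (1\leq i\leq|u|),\ \omega_i=v_i\ (0\leq i\leq|v|-1)\}$ (possibly empty). For a clopen $U$ with $U,TU,T^2U$ pairwise disjoint, $\sigma_U(\omega)=T\omega$ on $U\cup TU$, $\sigma_U(\omega)=T^{-2}\omega$ on $T^2U$, $\sigma_U(\omega)=\omega$ elsewhere; $\sigma_\emptyset=1$. $G_T$ is the group of homeomorphisms $S$ of $\Omega$ with $S(x)=T^{f_S(x)}x$ for a continuous $f_S:\Omega\to\mathbb Z$; $G_T'$ its commutator subgroup. For group elements $r,s$, $r\ast s:=s\,r^{-1}s^{-1}r$. *)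

(* Defs.v *)
From Stdlib Require Import ZArith ClassicalEpsilon.
From mathcomp Require Import all_boot.
Set Implicit Arguments. Unset Strict Implicit. Unset Printing Implicit Defensive.

Section Subshift.
Variable A : finType.

Definition config := Z -> A.

Definition shiftn (k : Z) (x : config) : config := fun m => x (m + k)%Z.
Definition shift (x : config) : config := shiftn 1 x.

(* Closedness in the product topology (A discrete): a point all of whose
   central windows are matched by points of Om lies in Om. *)
Definition closed_set (Om : config -> Prop) : Prop :=
  forall x, (forall N : nat, exists y, Om y /\
                forall i : Z, (Z.abs i <= Z.of_nat N)%Z -> y i = x i) -> Om x.

Definition shift_invariant (Om : config -> Prop) : Prop :=
  forall x, Om x <-> Om (shift x).

Definition orbits_dense (Om : config -> Prop) : Prop :=
  forall x y, Om x -> Om y -> forall N : nat, exists k : Z,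
    forall i : Z, (Z.abs i <= Z.of_nat N)%Z -> shiftn k x i = y i.

Definition minimal_subshift (Om : config -> Prop) : Prop :=
  [/\ closed_set Om, shift_invariant Om & orbits_dense Om].

(* u occurs in Om (u in L(Om)); words indexed from 0. *)
Definition in_L (Om : config -> Prop) (u : seq A) : Prop :=
  exists x, Om x /\ [seq x (Z.of_nat i) | i <- iota 0 (size u)] = u.

Definition cyl (Om : config -> Prop) (u v : seq A) (x : config) : Prop :=
  Om x /\
  [seq x (Z.of_nat i - Z.of_nat (size u))%Z | i <- iota 0 (size u)] = u /\
  [seq x (Z.of_nat i) | i <- iota 0 (size v)] = v.

Definition decP (P : Prop) : bool :=
  if excluded_middle_informative P then true else false.

(* sigma_U : T on U \cup TU, T^{-2} on T^2 U, identity elsewhere.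
   x \in T^k U iff T^{-k} x \in U. *)
Definition sigma (U : config -> Prop) (x : config) : config :=
  if decP (U x \/ U (shiftn (-1) x)) then shift x
  else if decP (U (shiftn (-2) x)) then shiftn (-2) x
  else x.

(* Its inverse (when U, TU, T^2U are pairwise disjoint):
   T^2 on U, T^{-1} on TU \cup T^2U, identity elsewhere. *)
Definition sigma_inv (U : config -> Prop) (x : config) : config :=
  if decP (U x) then shiftn 2 x
  else if decP (U (shiftn (-1) x) \/ U (shiftn (-2) x)) then shiftn (-1) x
  else x.

Record gelt := GElt { gfun : config -> config; ginvfun : config -> config }.

Definition gmul (r s : gelt) : gelt :=
  GElt (fun x => gfun r (gfun s x)) (fun x => ginvfun s (ginvfun r x)).
Definition ginv (r : gelt) : gelt := GElt (ginvfun r) (gfun r).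
Definition gone : gelt := GElt id id.

Definition gstar (r s : gelt) : gelt :=
  gmul s (gmul (ginv r) (gmul (ginv s) r)).

Definition gsigma (U : config -> Prop) : gelt := GElt (sigma U) (sigma_inv U).

Definition word_elt (Om : config -> Prop) (w : seq A) : gelt :=
  match w with
  | [::] => gone
  | a :: _ =>
    let n := size w in
    let c i := nth a w i in
    foldr gstar (gsigma (cyl Om [:: c (n - 3)] [:: c (n - 2); c (n - 1)]))
      [seq gsigma (cyl Om [::] [:: c i; c i.+1]) | i <- iota 0 (n - 3)]
  end.

(* An element of G_T is 1 iff it acts as the identity on Om. *)
Definition is_one_on (Om : config -> Prop) (g : gelt) : Prop :=
  forall x, Om x -> gfun g x = x.

End Subshift.

(* Main.v *)
From Stdlib Require Import ZArith Lia Classical ClassicalEpsilon FunctionalExtensionality.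
Require Import Defs.
From mathcomp Require Import all_boot zify.
Set Implicit Arguments. Unset Strict Implicit.

Lemma shiftnS (A : finType) (a b : Z) (x : config A) :
  shiftn a (shiftn b x) = shiftn (b + a) x.
Proof. apply: functional_extensionality => m; rewrite /shiftn; f_equal; lia. Qed.

Lemma shiftn0 (A : finType) (x : config A) : shiftn 0 x = x.
Proof. apply: functional_extensionality => m; rewrite /shiftn; f_equal; lia. Qed.

Lemma Om_shiftn (A : finType) (Om : config A -> Prop) x k :
  shift_invariant Om -> Om x -> Om (shiftn k x).
Proof.
move=> Hs Hx.
have pos : forall n : nat, Om (shiftn (Z.of_nat n) x).
  elim=> [|n IH]; first by rewrite shiftn0.
  have := (Hs _).1 IH; rewrite /shift shiftnS.
  by have -> : (Z.of_nat n + 1 = Z.of_nat n.+1)%Z by lia.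
have neg : forall n : nat, Om (shiftn (- Z.of_nat n) x).
  elim=> [|n IH]; first by rewrite shiftn0.
  apply/Hs; rewrite /shift shiftnS.
  by have -> : (- Z.of_nat n.+1 + 1 = - Z.of_nat n)%Z by lia.
case: (Z_le_gt_dec 0 k) => hk.
  by have -> : k = Z.of_nat (Z.to_nat k) by lia.
by have -> : k = (- Z.of_nat (Z.to_nat (- k)))%Z by lia.
Qed.

Lemma dcases (P : Prop) : (P /\ Defs.decP P = true) \/ (~ P /\ Defs.decP P = false).
Proof. rewrite /Defs.decP; destruct (excluded_middle_informative P); tauto. Qed.

Lemma decP_ext P Q : (P <-> Q) -> Defs.decP P = Defs.decP Q.
Proof. by move=> PQ; case: (dcases P) (dcases Q); intuition; congruence. Qed.

Definition fidx (u : Z -> Prop) (k : Z) : Z :=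
  if Defs.decP (u k \/ u (k + -1)%Z) then (k + 1)%Z
  else if Defs.decP (u (k + -2)%Z) then (k + -2)%Z else k.
Definition finv (u : Z -> Prop) (k : Z) : Z :=
  if Defs.decP (u k) then (k + 2)%Z
  else if Defs.decP (u (k + -1)%Z \/ u (k + -2)%Z) then (k + -1)%Z else k.

Definition uof (A : finType) (P : config A -> Prop) (x : config A) := fun i => P (shiftn i x).

Lemma sigma_sh (A : finType) (U : config A -> Prop) x k :
  sigma U (shiftn k x) = shiftn (fidx (uof U x) k) x.
Proof.
rewrite /sigma /fidx /uof /shift !shiftnS.
by destruct (Defs.decP (_ \/ _)); [|destruct (Defs.decP _)].
Qed.

Lemma sigma_inv_sh (A : finType) (U : config A -> Prop) x k :
  sigma_inv U (shiftn k x) = shiftn (finv (uof U x) k) x.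
Proof.
rewrite /sigma_inv /finv /uof !shiftnS.
by destruct (Defs.decP (U _)); [|destruct (Defs.decP _)].
Qed.

Lemma sigma_ext (A : finType) (U V : config A -> Prop) x :
  (forall y, U y <-> V y) -> sigma U x = sigma V x /\ sigma_inv U x = sigma_inv V x.
Proof.
move=> E; rewrite /sigma /sigma_inv.
rewrite (decP_ext (P := U x \/ _) (Q := V x \/ V (shiftn (-1) x))); last by rewrite !E.
rewrite (decP_ext (P := U (shiftn (-2) x)) (Q := V (shiftn (-2) x))); last by rewrite !E.
rewrite (decP_ext (P := U x) (Q := V x)); last by rewrite !E.
rewrite (decP_ext (P := U (shiftn (-1) x) \/ _) (Q := V (shiftn (-1) x) \/ V (shiftn (-2) x))) //.
by rewrite !E.
Qed.

Lemma fidx_ext (p q : Z -> Prop) k : (forall i, p i <-> q i) -> fidx p k = fidx q k /\ finv p k = finv q k.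
Proof.
move=> E; rewrite /fidx /finv.
rewrite (decP_ext (P := p k \/ _) (Q := q k \/ q (k + -1)%Z)); last by rewrite !E.
rewrite (decP_ext (P := p (k + -2)%Z) (Q := q (k + -2)%Z)); last by rewrite !E.
rewrite (decP_ext (P := p k) (Q := q k)); last by rewrite !E.
rewrite (decP_ext (P := p (k + -1)%Z \/ _) (Q := q (k + -1)%Z \/ q (k + -2)%Z)) //.
by rewrite !E.
Qed.

Lemma map_iota_eq (A : finType) (f : nat -> A) (l : seq A) d m :
  size l = m -> (forall j, (j < m)%N -> f j = nth d l j) -> [seq f i | i <- iota 0 m] = l.
Proof.
move=> Hs H; apply: (@eq_from_nth _ d); first by rewrite size_map size_iota.
move=> i; rewrite size_map size_iota => Hi.
by rewrite (nth_map 0%N) ?size_iota // nth_iota // add0n H.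
Qed.

Lemma map_iota_nth (A : finType) (f : nat -> A) (l : seq A) d m :
  [seq f i | i <- iota 0 m] = l -> forall j, (j < m)%N -> f j = nth d l j.
Proof.
move=> <- j Hj; by rewrite (nth_map 0%N) ?size_iota // nth_iota.
Qed.

Lemma nr (A : finType) (Om : config A -> Prop) x p q :
  shift_invariant Om ->
  (forall u : seq A, in_L Om u -> size u = 5 -> uniq u) ->
  Om x -> p <> q -> (Z.abs (p - q) <= 4)%Z -> x p <> x q.
Proof.
move=> Hs Hu Hx pq hpq E.
set m := Z.min p q.
set y := shiftn m x.
set l := [seq y (Z.of_nat j) | j <- iota 0 5].
have Hl : uniq l.
  apply: Hu; last by rewrite size_map size_iota.
  exists y; split; first exact: Om_shiftn.
  by rewrite size_map size_iota.
have nl : forall j, (j < 5)%N -> nth (x p) l j = y (Z.of_nat j).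
  by move=> j Hj; rewrite (nth_map 0%N) ?size_iota // nth_iota.
have := nth_uniq (x p) (i := Z.to_nat (p - m)) (j := Z.to_nat (q - m)) _ _ Hl.
rewrite size_map size_iota !nl; try lia.
rewrite /y /shiftn !Z2Nat.id; try lia.
have -> : (p - m + m = p)%Z by lia.
have -> : (q - m + m = q)%Z by lia.
rewrite E eqxx => H; move: (H ltac:(lia) ltac:(lia)) => H'; symmetry in H'; move/eqP: H'; lia.
Qed.

Ltac splitdec := match goal with |- context [Defs.decP ?P] =>
  lazymatch P with context [Defs.decP _] => fail | _ =>
  let H := fresh "H" in destruct (dcases P) as [[H ->]|[H ->]]; cbv beta iota end end.

Ltac normh := repeat match goal with
  | H : _ \/ _ |- _ => destruct H
  | H : _ /\ _ |- _ => destruct H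
  | H : ~ (_ \/ _) |- _ => apply Decidable.not_or in H
  | H : ~ (?A /\ ?B) |- _ => destruct (classic A); [ assert (~ B) by tauto | ]; clear H
  end.

Ltac contra u s C1 C2 C3 := match goal with
  | H1 : u ?p, H2 : ~ u ?q |- _ => exfalso; apply H2; replace q with p by lia; exact H1
  | H1 : s ?p, H2 : ~ s ?q |- _ => exfalso; apply H2; replace q with p by lia; exact H1
  | H1 : u ?p, H2 : u ?q |- _ => exfalso; apply (C1 p q H1 H2); lia
  | H1 : s ?p, H2 : s ?q |- _ => exfalso; apply (C2 p q H1 H2); lia
  | H1 : u ?p, H2 : s ?q |- _ => exfalso; apply (C3 p q H1 H2); lia
  end.

Definition rr (u s : Z -> Prop) t := u (t + -1)%Z /\ s (t + 1)%Z.

Lemma main12 (u s : Z -> Prop)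
  (C1 : forall i j, u i -> u j -> i <> j -> (Z.abs (i - j) <= 4)%Z -> False)
  (C2 : forall i j, s i -> s j -> i <> j -> (Z.abs (i - j) <= 4)%Z -> False)
  (C3 : forall i j, u i -> s j -> j <> (i + 2)%Z -> (Z.abs (j - i - 2) <= 4)%Z -> False) k :
  fidx s (finv u (finv s (fidx u k))) = fidx (rr u s) k /\
  finv u (fidx s (fidx u (finv s k))) = finv (rr u s) k.
Proof.
split; rewrite /fidx /finv /rr;
repeat (splitdec; normh; try contra u s C1 C2 C3); try lia.
Qed.

Lemma step (A : finType) (Om : config A -> Prop) (U S R : config A -> Prop) (g : gelt A) :
  shift_invariant Om ->
  (forall x, Om x -> forall i j, U (shiftn i x) -> U (shiftn j x) -> i <> j -> (Z.abs (i - j) <= 4)%Z -> False) ->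
  (forall x, Om x -> forall i j, S (shiftn i x) -> S (shiftn j x) -> i <> j -> (Z.abs (i - j) <= 4)%Z -> False) ->
  (forall x, Om x -> forall i j, U (shiftn i x) -> S (shiftn j x) -> j <> (i + 2)%Z -> (Z.abs (j - i - 2) <= 4)%Z -> False) ->
  (forall x, Om x -> forall t, R (shiftn t x) <-> U (shiftn (t + -1) x) /\ S (shiftn (t + 1) x)) ->
  (forall y, Om y -> gfun g y = sigma S y /\ ginvfun g y = sigma_inv S y) ->
  forall y, Om y -> gfun (gstar (gsigma U) g) y = sigma R y /\ ginvfun (gstar (gsigma U) g) y = sigma_inv R y.
Proof.
move=> Hs C1 C2 C3 HR Hg y Hy.
rewrite -(shiftn0 y) /gstar /=.
have Hg1 : forall k, gfun g (shiftn k y) = sigma S (shiftn k y).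
  by move=> k; apply: (Hg _ (Om_shiftn _ Hs Hy)).1.
have Hg2 : forall k, ginvfun g (shiftn k y) = sigma_inv S (shiftn k y).
  by move=> k; apply: (Hg _ (Om_shiftn _ Hs Hy)).2.
have [M1 M2] := main12 (C1 _ Hy) (C2 _ Hy) (C3 _ Hy) 0.
have [E1 E2] := fidx_ext 0 (p := uof R y) (q := rr (uof U y) (uof S y)) (HR _ Hy).
split.
- by do 6 rewrite ?sigma_sh ?sigma_inv_sh ?Hg1 ?Hg2; rewrite M1 E1.
- by do 6 rewrite ?sigma_sh ?sigma_inv_sh ?Hg1 ?Hg2; rewrite M2 E2.
Qed.

Definition Wp (A : finType) (Om : config A -> Prop) (c : nat -> A) (n i : nat) (y : config A) : Prop :=
  Om y /\ forall j, (j < n - i)%N -> y (Z.of_nat j - 1)%Z = c (i + j)%N.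

Definition Eelt (A : finType) (Om : config A -> Prop) (c : nat -> A) (n i : nat) : gelt A :=
  foldr (@gstar A) (gsigma (cyl Om [:: c (n - 3)%N] [:: c (n - 2)%N; c (n - 1)%N]))
      [seq gsigma (cyl Om [::] [:: c j; c j.+1]) | j <- iota i (n - 3 - i)].

Lemma cyl_ab (A : finType) (Om : config A -> Prop) a b y :
  cyl Om [::] [:: a; b] y <-> Om y /\ y 0%Z = a /\ y 1%Z = b.
Proof.
rewrite /cyl /=; split.
- by case=> H [_ [-> ->]].
- by case=> H [-> ->].
Qed.

Lemma cyl_abc (A : finType) (Om : config A -> Prop) a b c y :
  cyl Om [:: a] [:: b; c] y <-> Om y /\ y (-1)%Z = a /\ y 0%Z = b /\ y 1%Z = c.
Proof.
rewrite /cyl /=; split.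
- by case=> H [[->] [-> ->]].
- by case=> H [-> [-> ->]].
Qed.

Lemma xeq (A : finType) (x : config A) p q v : x p = v -> p = q -> x q = v.
Proof. by move=> H <-. Qed.

Lemma Eelt_S (A : finType) (Om : config A -> Prop) c n i : (i < n - 3)%N ->
  Eelt Om c n i = gstar (gsigma (cyl Om [::] [:: c i; c i.+1])) (Eelt Om c n i.+1).
Proof. by move=> H; rewrite /Eelt (_ : (n - 3 - i = (n - 3 - i.+1).+1)%N) //; lia. Qed.

Lemma invariant (A : finType) (Om : config A -> Prop) (c : nat -> A) n :
  shift_invariant Om ->
  (forall u : seq A, in_L Om u -> size u = 5 -> uniq u) -> (4 <= n)%N ->
  forall d i, (i + d = n - 3)%N -> forall y, Om y ->
  gfun (Eelt Om c n i) y = sigma (Wp Om c n i) y /\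
  ginvfun (Eelt Om c n i) y = sigma_inv (Wp Om c n i) y.
Proof.
move=> Hs Hu Hn; elim=> [|d IH] i Hi y Hy.
- have -> : Eelt Om c n i = gsigma (cyl Om [:: c (n - 3)%N] [:: c (n - 2)%N; c (n - 1)%N]).
    by rewrite /Eelt (_ : (n - 3 - i = 0)%N) //; lia.
  apply: sigma_ext => z; rewrite cyl_abc /Wp; split.
  + case=> Hz [h1 [h2 h3]]; split=> // j Hj.
    case: j Hj => [|[|[|j]]] Hj; try lia.
    * by rewrite (_ : (i + 0 = n - 3)%N); [exact: h1|lia].
    * by rewrite (_ : (i + 1 = n - 2)%N); [exact: h2|lia].
    * by rewrite (_ : (i + 2 = n - 1)%N); [exact: h3|lia].
  + case=> Hz H; split=> //.
    have e0 := H 0%N ltac:(lia); have e1 := H 1%N ltac:(lia); have e2 := H 2%N ltac:(lia).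
    rewrite (_ : (i + 0 = n - 3)%N) in e0; last lia.
    rewrite (_ : (i + 1 = n - 2)%N) in e1; last lia.
    rewrite (_ : (i + 2 = n - 1)%N) in e2; last lia.
    by split; [exact: e0|split; [exact: e1|exact: e2]].
- rewrite Eelt_S; last lia.
  have IH' := IH i.+1 ltac:(lia).
  apply: (step (U := cyl Om [::] [:: c i; c i.+1]) (S := Wp Om c n i.+1) (R := Wp Om c n i)) => //.
  + move=> x Hx p q /cyl_ab [_ [hp _]] /cyl_ab [_ [hq _]] pq hpq.
    apply: (nr (p := p) (q := q) Hs Hu Hx pq hpq).
    rewrite /shiftn in hp hq; rewrite (xeq hp) ?(xeq hq) //; lia.
  + move=> x Hx p q; rewrite /Wp => -[_ hp] [_ hq] pq hpq.
    have e1 := hp 0%N ltac:(lia); have e2 := hq 0%N ltac:(lia).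
    rewrite /shiftn in e1 e2.
    apply: (nr (p := (p - 1)%Z) (q := (q - 1)%Z) Hs Hu Hx); try lia.
    rewrite (xeq e1) ?(xeq e2) //; lia.
  + move=> x Hx p q; rewrite /Wp => /cyl_ab [_ [_ hp]] [_ hq] pq hpq.
    have e2 := hq 0%N ltac:(lia).
    rewrite /shiftn addn0 in e2 hp.
    apply: (nr (p := (p + 1)%Z) (q := (q - 1)%Z) Hs Hu Hx); try lia.
    rewrite (xeq hp) ?(xeq e2) //; lia.
  + move=> x Hx t; rewrite cyl_ab /Wp; split.
    * case=> _ H.
      split; first (split; first exact: Om_shiftn).
        have e0 := H 0%N ltac:(lia); have e1 := H 1%N ltac:(lia).
        rewrite /shiftn addn0 addn1 in e0 e1.
        by split; [apply: (xeq e0) | apply: (xeq e1)]; lia.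
      split; first exact: Om_shiftn.
      move=> j Hj; have := H j.+1 ltac:(lia); rewrite /shiftn addSn -addnS => e.
      apply: (xeq e); lia.
    * case=> [[_ [h0 h1]] [_ H]].
      split; first exact: Om_shiftn.
      case=> [|j] Hj.
        rewrite /shiftn addn0 in h0 *; apply: (xeq h0); lia.
      have := H j ltac:(lia); rewrite /shiftn addSn -addnS => e.
      apply: (xeq e); lia.
Qed.

Lemma Wp_inL (A : finType) (Om : config A -> Prop) a (w : seq A) z :
  shift_invariant Om -> Wp Om (nth a w) (size w) 0 z -> in_L Om w.
Proof.
move=> Hs [Hz H]; exists (shiftn (-1) z); split; first exact: Om_shiftn.
apply: (map_iota_eq (d := a)) => // j Hj.
have := H j ltac:(lia); rewrite add0n /shiftn => e; apply: (xeq e); lia.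
Qed.

Unset Implicit Arguments.

Theorem corollary3p7 (A : finType) (Om : config A -> Prop) (w : seq A) :
  minimal_subshift Om ->
  (forall u : seq A, in_L Om u -> size u = 5 -> uniq u) ->
  4 <= size w ->
  (in_L Om w <-> ~ is_one_on Om (word_elt Om w)).
Proof.
case=> _ Hs _ Hu; case: w => [|a w'] // Hn.
set w := a :: w'.
have Ew : word_elt Om w = Eelt Om (nth a w) (size w) 0 by rewrite /Eelt subn0.
have Hn' : (4 <= size w)%N by [].
have Inv := invariant (nth a w) Hs Hu Hn' (d := (size w - 3)%N) (i := 0%N) ltac:(lia).
rewrite /is_one_on Ew; split.
- case=> x0 [Hx0 Hmap] Hone.
  set y := shiftn 1 x0.
  have Hy : Om y by exact: Om_shiftn.
  have := Hone y Hy; rewrite (Inv y Hy).1 /sigma.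
  case: (dcases (Wp Om (nth a w) (size w) 0 y \/ Wp Om (nth a w) (size w) 0 (shiftn (-1) y))) => [[_ ->]|[H _]].
  + move/(f_equal (fun f => f (-1)%Z)); rewrite /shift /y /shiftn.
    apply: (nr (p := 1%Z) (q := 0%Z) Hs Hu Hx0) => //; lia.
  + exfalso; apply: H; left; split=> // j Hj.
    have e := @map_iota_nth A _ _ a _ Hmap j ltac:(lia).
    rewrite /y /shiftn add0n -e; f_equal; lia.
- move=> Hnot; apply: NNPP => HL; apply: Hnot => x Hx.
  rewrite (Inv x Hx).1 /sigma.
  case: (dcases (Wp Om (nth a w) (size w) 0 x \/ Wp Om (nth a w) (size w) 0 (shiftn (-1) x))) => [[H _]|[_ ->]].
    by exfalso; case: H => H; apply: HL; exact: Wp_inL H.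
  case: (dcases (Wp Om (nth a w) (size w) 0 (shiftn (-2) x))) => [[H _]|[_ ->]] //.
  by exfalso; apply: HL; exact: Wp_inL H.
Qed.
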